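(* Let $n\ge 3$. The resolving polynomial of the power graph $P(G(n))$ of the gyrogroup $G(n)$ (defined in the context) is $$\psi(P(G(n)),x)=x^{2^n}+2^n x^{2^n-1}+(2^{2n-2}+2^{n-1}-1)x^{2^n-2}+(2^{2n-2}-2^{n-1})x^{2^n-3}.$$
   Context: Let $n\ge 3$ be an integer and $m=2^{n-1}$. Let $P(n)=\{0,1,\dots,m-1\}$, $H(n)=\{m,m+1,\dots,2^n-1\}$ and $G(n)=P(n)\cup H(n)$. For $i,j\in G(n)$ let $t,s,k\in P(n)$ be the residues modulo $m$ (taken in $\{0,\dots,m-1\}$) of $i+j$, $i+(\frac m2-1)j$ and $(\frac m2+1)i+(\frac m2-1)j$, respectively, and define $i\oplus j=t$ if $i,j\in P(n)$; $i\oplus j=t+m$ if $i\in P(n),j\in H(n)$; $i\oplus j=s+m$ if $i\in H(n),j\in P(n)$; $i\oplus j=k$ if $i,j\in H(n)$. Then $(G(n),\oplus)$ is a gyrogroup with identity $e=0$. Powers are defined by $a^1=a$, $a^{k+1}=a^k\oplus a$. The power graph $P(G(n))$ is the simple undirected graph with vertex set $G(n)$ in which distinct vertices $u,v$ are adjacent if and only if $u^k=v$ or $v^k=u$ for some positive integer $k$. For a connected graph $G$ and an ordered set $U=\{u_1,\dots,u_s\}\subseteq V(G)$, the representation of $v$ is $r(v|U)=(d(v,u_1),\dots,d(v,u_s))$; $U$ is a resolving set if distinct vertices have distinct representations, and the metric dimension $\psi(G)$ is the minimum size of a resolving set. If $|V(G)|=N$ and $r_k$ denotes the number of resolving sets of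 $G$ of cardinality $k$, the resolving polynomial is $\psi(G,x)=\sum_{k=\psi(G)}^{N} r_k x^k$. *)

(* Defs.v *)
From mathcomp Require Import all_boot all_order all_algebra.
From Stdlib Require Import ClassicalEpsilon.
Set Implicit Arguments. Unset Strict Implicit. Unset Printing Implicit Defensive.
Import GRing.Theory.

(* The gyrogroup G(n) on {0,...,2^n-1}, m = 2^(n-1); operation on naturals. *)
Definition gm (n : nat) : nat := 2 ^ n.-1.

Definition gyro_op (n i j : nat) : nat :=
  let m := gm n in
  let t := (i + j) %% m in
  let s := (i + (m %/ 2 - 1) * j) %% m in
  let k := ((m %/ 2 + 1) * i + (m %/ 2 - 1) * j) %% m in
  if i < m then (if j < m then t else t + m)
  else (if j < m then s + m else k).

(* a^k with a^1 = a, a^(k+1) = a^k (+) a  (meaningful for k >= 1) *)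
Definition gyro_pow (n a k : nat) : nat := iter k.-1 (fun x => gyro_op n x a) a.

Notation vert n := 'I_(2 ^ n).

Definition power_adj (n : nat) (u v : vert n) : Prop :=
  u <> v /\ exists k : nat, 0 < k /\
    (gyro_pow n u k = v \/ gyro_pow n v k = u).

Definition power_adjb (n : nat) : rel (vert n) :=
  fun u v => if excluded_middle_informative (power_adj u v) then true else false.

Definition walkb (n k : nat) (u v : vert n) : bool :=
  [exists p : k.-tuple (vert n), path (@power_adjb n) u p && (last u p == v)].

(* graph distance (the graph is connected, so a shortest walk has length < 2^n) *)
Definition gdist (n : nat) (u v : vert n) : nat :=
  \big[minn/#|vert n|]_(k < #|vert n| | walkb k u v) k.

Definition resolving (n : nat) (U : {set vert n}) : bool :=
  [forall v : vert n, forall w : vert n,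
     (v != w) ==> [exists u in U, gdist v u != gdist w u]].

Definition metric_dim (n : nat) : nat :=
  \big[minn/#|vert n|]_(U : {set vert n} | resolving U) #|U|.

Definition num_resolving (n k : nat) : nat :=
  #|[set U : {set vert n} | resolving U && (#|U| == k)]|.

Definition resolving_poly (n : nat) : {poly int} :=
  \sum_(metric_dim n <= k < (#|vert n|).+1) (num_resolving n k)%:R *: 'X^k.

(* Main.v *)
Require Import Defs.
From mathcomp Require Import all_boot all_order all_algebra.
From mathcomp Require Import zify.
From Stdlib Require Import ClassicalEpsilon.
Import GRing.Theory.
Set Implicit Arguments. Unset Strict Implicit.

Lemma gm_ge4 n : 3 <= n -> 4 <= gm n.
Proof.
move=> hn; rewrite /gm; have -> : n.-1 = (n.-1 - 2) + 2 by lia.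
by rewrite expnD leq_pmull // expn_gt0.
Qed.

Lemma gm_half n : 3 <= n -> gm n %/ 2 * 2 = gm n.
Proof.
move=> hn; rewrite /gm; have -> : n.-1 = (n.-1 - 1).+1 by lia.
by rewrite expnS mulKn // mulnC.
Qed.

Lemma N_2m n : 3 <= n -> 2 ^ n = 2 * gm n.
Proof. by move=> hn; rewrite /gm -expnS; congr (_ ^ _); lia. Qed.

Lemma pow_P n a k : 0 < k -> a < gm n -> gyro_pow n a k = (k * a) %% gm n.
Proof.
move=> + ha; case: k => // k _; rewrite /gyro_pow /=.
elim: k => [|k IH] /=; first by rewrite mul1n modn_small.
rewrite IH /gyro_op ltn_pmod ?ha; last by lia.
by rewrite modnDml mulSn addnC.
Qed.

Lemma pow_H n a k : 3 <= n -> gm n <= a < 2 * gm n -> 0 < k ->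
  gyro_pow n a k = if odd k then a else 0.
Proof.
move=> hn ha; have h4 := gm_ge4 hn; have hh := gm_half hn.
case: k => // k _; rewrite /gyro_pow /=.
elim: k => [|k IH] /=; first by [].
have ha' : (a < gm n) = false by lia.
have h0 : 0 < gm n by lia.
rewrite IH; case: (odd k) => /=; rewrite /gyro_op ha' ?h0.
  have -> : a = (a - gm n) + gm n by lia.
  by rewrite add0n modnDr modn_small; lia.
have -> : (gm n %/ 2 + 1) * a + (gm n %/ 2 - 1) * a = a * gm n.
  rewrite -mulnDl mulnC; congr (_ * _); lia.
by rewrite modnMl.
Qed.
Lemma lin_sol m u v : 0 < m -> 0 < u -> gcdn u m %| v ->
  exists k, 0 < k /\ (k * u) %% m = v %% m.
Proof.
move=> hm hu /dvdnP [c ->].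
case: (egcdnP m hu) => km kn def _.
exists (km * c + m); split; first by lia.
have -> : (km * c + m) * u = (c * kn + u) * m + c * gcdn u m.
  have : c * (km * u) = c * (kn * m + gcdn u m) by rewrite def.
  lia.
by rewrite modnMDl.
Qed.

Lemma cyc_adj e u v : 0 < u < 2 ^ e -> 0 < v < 2 ^ e ->
  exists k, 0 < k /\ ((k * u) %% 2 ^ e = v \/ (k * v) %% 2 ^ e = u).
Proof.
move=> /andP [u0 ue] /andP [v0 ve].
have [a _ ha] : exists2 a, a <= e & gcdn u (2 ^ e) = 2 ^ a.
  by apply/dvdn_pfactor => //; apply: dvdn_gcdr.
have [b _ hb] : exists2 b, b <= e & gcdn v (2 ^ e) = 2 ^ b.
  by apply/dvdn_pfactor => //; apply: dvdn_gcdr.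
have he : 0 < 2 ^ e by rewrite expn_gt0.
case: (leqP a b) => hab.
  have : gcdn u (2 ^ e) %| v.
    rewrite ha (dvdn_trans (dvdn_exp2l 2 hab)) // -hb; exact: dvdn_gcdl.
  move/(lin_sol he u0) => [k [k0 hk]]; exists k; split => //; left.
  by rewrite hk modn_small.
have : gcdn v (2 ^ e) %| u.
  rewrite hb (dvdn_trans (dvdn_exp2l 2 (ltnW hab))) // -ha; exact: dvdn_gcdl.
move/(lin_sol he v0) => [k [k0 hk]]; exists k; split => //; right.
by rewrite hk modn_small.
Qed.

Lemma vlt n (hn : 3 <= n) (u : vert n) : (u : nat) < 2 * gm n.
Proof. by rewrite -N_2m. Qed.

Lemma pow_u0 n (hn : 3 <= n) (u : vert n) : (u : nat) <> 0 ->
  exists k, 0 < k /\ gyro_pow n u k = 0.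
Proof.
move=> u0; have h4 := gm_ge4 hn; have hu := vlt hn u.
case: (ltnP u (gm n)) => hum.
  exists (gm n); split; first by lia.
  by rewrite pow_P ?modnMr //; lia.
exists 2; split => //; rewrite pow_H //; lia.
Qed.

Lemma adj_char n (hn : 3 <= n) (u v : vert n) :
  power_adj u v <-> u <> v /\
     (((u : nat) < gm n /\ (v : nat) < gm n) \/ (u : nat) = 0 \/ (v : nat) = 0).
Proof.
have h4 := gm_ge4 hn; have hu := vlt hn u; have hv := vlt hn v.
have vi : (u : nat) = v -> u = v by move=> /val_inj.
split.
  move=> [neq [k [k0 H]]]; split => //.
  case: (ltnP u (gm n)) => hum; case: (ltnP v (gm n)) => hvm; first by left.
  - case: H => H.
      have := pow_P k0 hum; rewrite H => E.
      have : (k * u) %% gm n < gm n by rewrite ltn_pmod; lia.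
      lia.
    move: H; rewrite pow_H //; last by lia.
    case: (odd k) => H; first by case: neq; apply: vi.
    by right; left.
  - case: H => H; last first.
      have := pow_P k0 hvm; rewrite H => E.
      have : (k * v) %% gm n < gm n by rewrite ltn_pmod; lia.
      lia.
    move: H; rewrite pow_H //; last by lia.
    case: (odd k) => H; first by case: neq; apply: vi.
    by right; right.
  - case: H; rewrite pow_H //; try lia; case: (odd k) => H; try lia;
      by case: neq; apply: vi.
move=> [neq H]; split => //.
case: (posnP u) => u0.
  have [|k [k0 hk]] := pow_u0 hn (u := v); first by move=> v0; apply: neq; apply: vi; lia.
  by exists k; split => //; right; rewrite hk u0.
case: (posnP v) => v0.
  have [|k [k0 hk]] := pow_u0 hn (u := u); first by lia.
  by exists k; split => //; left; rewrite hk v0.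
case: H => [[hum hvm]|]; last by lia.
have := @cyc_adj n.-1 u v; rewrite -/(gm n) u0 v0 hum hvm => /(_ isT isT).
move=> [k [k0 hk]]; exists k; split => //.
by rewrite !pow_P.
Qed.

Lemma adjbE n (hn : 3 <= n) (u v : vert n) :
  @power_adjb n u v = (u != v) &&
    [|| ((u : nat) < gm n) && ((v : nat) < gm n), (u : nat) == 0 | (v : nat) == 0].
Proof.
rewrite /power_adjb; destruct (excluded_middle_informative _) as [H|H]; simpl.
  have [neq {}H] := (iffLR (adj_char hn u v) H).
  have -> : (u != v) by apply/eqP.
  by case: H => [[hu hv]|[->|->]] /=; rewrite ?hu ?hv ?eqxx ?orbT.
apply/esym/negP => /andP [/eqP neq H2]; apply: H; apply/(adj_char hn); split => //.
case/or3P: H2 => [/andP[hu hv]|/eqP->|/eqP->].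
- by left; split.
- by right; left.
- by right; right.
Qed.

Lemma walk0 n (u v : vert n) : walkb 0 u v = (u == v).
Proof.
rewrite /walkb; apply/existsP/idP => [[p]|/eqP <-].
  by rewrite tuple0 /=.
by exists [tuple] => /=.
Qed.

Lemma walk1 n (u v : vert n) : walkb 1 u v = @power_adjb n u v.
Proof.
rewrite /walkb; apply/existsP/idP => [[p]|H].
  case: p => [[|w [|? ?]] //= _] /andP [/andP [H _] /eqP <-] //.
by exists [tuple v] => /=; rewrite H eqxx.
Qed.

Lemma walk2 n (u v w : vert n) : @power_adjb n u w -> @power_adjb n w v -> walkb 2 u v.
Proof.
move=> H1 H2; apply/existsP; exists [tuple w; v] => /=.
by rewrite H1 H2 eqxx.
Qed.

Lemma bigmin_le_seq (I : eqType) (r : seq I) (P : pred I) (F : I -> nat) x j :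
  j \in r -> P j -> \big[minn/x]_(i <- r | P i) F i <= F j.
Proof.
elim: r => // a r IH; rewrite in_cons big_cons => /orP [/eqP <- -> | jr Pj].
  exact: geq_minl.
case: (P a); last exact: IH.
exact: leq_trans (geq_minr _ _) (IH jr Pj).
Qed.

Lemma gdist_eq n (u v : vert n) j : walkb j u v -> (forall i, i < j -> ~~ walkb i u v) ->
  j < 2 ^ n -> gdist u v = j.
Proof.
move=> hw hn hj; have hj' : j < #|vert n| by rewrite card_ord.
apply/eqP; rewrite eqn_leq; apply/andP; split.
  by rewrite /gdist; apply: (@bigmin_le_seq _ _ _ _ _ (Ordinal hj')) => //; rewrite mem_index_enum.
rewrite /gdist; apply: (big_ind (fun x => j <= x)) => //; first by apply: ltnW.
  by move=> x y hx hy; rewrite leq_min hx hy.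
move=> i hi; rewrite leqNgt; apply/negP => /hn; by rewrite hi.
Qed.

Lemma exv n i : i < 2 ^ n -> exists o : vert n, (o : nat) = i.
Proof. by move=> h; exists (Ordinal h). Qed.

Lemma gdistE n (hn : 3 <= n) (u v : vert n) :
  gdist u v = if u == v then 0 else
    if [|| ((u : nat) < gm n) && ((v : nat) < gm n), (u : nat) == 0 | (v : nat) == 0]
    then 1 else 2.
Proof.
have h4 := gm_ge4 hn; have hN := N_2m hn.
case: eqP => [->|neq].
  by apply: gdist_eq => //; [rewrite walk0 | rewrite expn_gt0].
have neq' : (u != v) by apply/eqP.
have hw0 : walkb 0 u v = false by rewrite walk0; apply/negbTE.
case: ifP => H.
  apply: gdist_eq; [by rewrite walk1 adjbE // neq' H| |by lia].
  by case => // _; rewrite hw0.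
have [z zE] := @exv n 0 ltac:(lia).
apply: gdist_eq; last by lia.
  have u0 : (u : nat) != 0 by apply/eqP => E; move: H; rewrite E eqxx orbT.
  have v0 : (v : nat) != 0 by apply/eqP => E; move: H; rewrite E eqxx !orbT.
  apply: (@walk2 _ _ _ z); rewrite adjbE // zE eqxx ?orbT ?andbT;
    apply/eqP => E; [by move: u0; rewrite E zE | by move: v0; rewrite -E zE].
case => [|[|]] // _; rewrite ?hw0 // walk1 adjbE // neq' H //.
Qed.

Definition Ps n : {set vert n} := [set x : vert n | (0 < x) && (x < gm n)].
Definition Hs n : {set vert n} := [set x : vert n | gm n <= x].

Lemma ordeqE k (a b : 'I_k) : (a == b) = (nat_of_ord a == nat_of_ord b).
Proof. by []. Qed.

Lemma in_U_of T (S U : {set T}) x y : #|S :\: U| <= 1 -> x \in S -> y \in S -> x != y ->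
  (x \in U) \/ (y \in U).
Proof.
move=> c xS yS xy; case: (boolP (x \in U)) => xU; first by left.
case: (boolP (y \in U)) => yU; first by right.
exfalso; move: c; rewrite leqNgt => /negP; apply; apply/card_gt1P.
by exists x, y; rewrite !inE xU yU xS yS.
Qed.

Lemma resolvingE n (hn : 3 <= n) (U : {set vert n}) :
  resolving U = (#|Ps n :\: U| <= 1) && (#|Hs n :\: U| <= 1).
Proof.
have h4 := gm_ge4 hn; have hN := N_2m hn.
apply/idP/idP.
  move=> R; apply/andP; split; rewrite leqNgt; apply/negP => /card_gt1P [p [q [hp hq pq]]];
  move/forallP: R => /(_ p) /forallP /(_ q) /implyP /(_ pq) /existsP [u /andP [uU]];
  move: hp hq; rewrite !inE => /andP [pU hp] /andP [qU hq];
  (have pu : (p == u) = false by apply/negP => /eqP E; move: pU; rewrite E uU);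
  (have qu : (q == u) = false by apply/negP => /eqP E; move: qU; rewrite E uU);
  move: pu qu; rewrite !gdistE // !ordeqE => pu qu;
  have hp' := vlt hn p; have hq' := vlt hn q; have hu' := vlt hn u;
  rewrite pu qu; repeat case: ifP => ?; lia.
move=> /andP [cP cH]; apply/forallP => v; apply/forallP => w; apply/implyP => vw.
case: (boolP (v \in U)) => vU.
  apply/existsP; exists v; rewrite vU /= !gdistE // !ordeqE.
  by move: vw; rewrite ordeqE => vw; repeat case: ifP => ?; lia.
case: (boolP (w \in U)) => wU.
  apply/existsP; exists w; rewrite wU /= !gdistE // !ordeqE.
  by move: vw; rewrite ordeqE => vw; repeat case: ifP => ?; lia.
have [o1 o1E] := @exv n 1 ltac:(lia).
have [o2 o2E] := @exv n 2 ltac:(lia).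
have [o3 o3E] := @exv n 3 ltac:(lia).
have [h1 h1E] := @exv n (gm n) ltac:(lia).
have [h2 h2E] := @exv n (gm n).+1 ltac:(lia).
have [hh [hU hH]] : exists h : vert n, h \in U /\ gm n <= h.
  have : (h1 \in U) \/ (h2 \in U).
    by apply: (in_U_of cH); rewrite ?inE ?ordeqE ?h1E ?h2E; lia.
  by case => ?; [exists h1 | exists h2]; rewrite ?h1E ?h2E; split => //; lia.
have pick : forall x : nat, exists p : vert n, p \in U /\ 0 < p < gm n /\ (p : nat) <> x.
  move=> x.
  have P1 : o1 \in Ps n by rewrite inE o1E; lia.
  have P2 : o2 \in Ps n by rewrite inE o2E; lia.
  have P3 : o3 \in Ps n by rewrite inE o3E; lia.
  case: (eqVneq x 1) => [->|x1].
    have : (o2 \in U) \/ (o3 \in U) by apply: (in_U_of cP); rewrite ?ordeqE ?o2E ?o3E.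
    by case => ?; [exists o2 | exists o3]; rewrite ?o2E ?o3E; split => //; lia.
  have : (o1 \in U) \/ (o2 \in U) by apply: (in_U_of cP); rewrite ?ordeqE ?o1E ?o2E.
  case => ?; [exists o1 | ]; rewrite ?o1E; first by split => //; lia.
  case: (eqVneq x 2) => [->|x2].
    have : (o1 \in U) \/ (o3 \in U) by apply: (in_U_of cP); rewrite ?ordeqE ?o1E ?o3E.
    by case => ?; [exists o1 | exists o3]; rewrite ?o1E ?o3E; split => //; lia.
  by exists o2; rewrite o2E; split => //; lia.
have nPP : ~ ((0 < v < gm n) /\ (0 < w < gm n)).
  move=> [hv hw]; have := in_U_of cP (x := v) (y := w).
  by rewrite !inE hv hw vw => /(_ isT isT isT) [] ?; [move/negP: vU | move/negP: wU].
have nHH : ~ ((gm n <= v) /\ (gm n <= w)).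
  move=> [hv hw]; have := in_U_of cH (x := v) (y := w).
  by rewrite !inE hv hw vw => /(_ isT isT isT) [] ?; [move/negP: vU | move/negP: wU].
have hv' := vlt hn v; have hw' := vlt hn w; have hvw : (v : nat) <> w.
  by move=> E; move: vw; rewrite ordeqE E eqxx.
have fin : forall u, u \in U -> (gdist v u != gdist w u) = true ->
    [exists u0 in U, gdist v u0 != gdist w u0].
  by move=> u uU E; apply/existsP; exists u; rewrite uU E.
case: (leqP (gm n) v) => hvm.
  have [p [pU [hp pw]]] := pick w.
  apply: (fin p pU); rewrite !gdistE // !ordeqE; have := vlt hn p.
  by repeat case: ifP => ?; lia.
case: (leqP (gm n) w) => hwm.
  have [p [pU [hp pw]]] := pick v.
  apply: (fin p pU); rewrite !gdistE // !ordeqE; have := vlt hn p.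
  by repeat case: ifP => ?; lia.
apply: (fin hh hU); rewrite !gdistE // !ordeqE; have := vlt hn hh.
by repeat case: ifP => ?; lia.
Qed.
Lemma card_lt N k : k <= N -> #|[set x : 'I_N | x < k]| = k.
Proof.
move=> kN.
have -> : [set x : 'I_N | x < k] = (widen_ord kN) @: [set: 'I_k].
  apply/setP => x; rewrite inE; apply/idP/imsetP => [hx|[y _ ->]].
    by exists (Ordinal hx) => //; apply: val_inj.
  by rewrite /= ltn_ord.
rewrite card_imset ?cardsT ?card_ord //.
by move=> a b /(congr1 val) /= /val_inj.
Qed.

Lemma card_Hs n (hn : 3 <= n) : #|Hs n| = gm n.
Proof.
have hN := N_2m hn.
have -> : Hs n = ~: [set x : vert n | x < gm n].
  by apply/setP => x; rewrite !inE leqNgt.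
have := cardsC [set x : vert n | x < gm n]; rewrite card_ord card_lt; last by lia.
set X := #|_|; lia.
Qed.

Lemma card_Ps n (hn : 3 <= n) : #|Ps n| = (gm n).-1.
Proof.
have hN := N_2m hn; have h4 := gm_ge4 hn.
have [z zE] := @exv n 0 ltac:(lia).
have -> : Ps n = [set x : vert n | x < gm n] :\ z.
  apply/setP => x; rewrite !inE ordeqE zE; case: (x : nat) => //.
have := cardsD1 z [set x : vert n | x < gm n]; rewrite card_lt; last by lia.
rewrite inE zE /=; set X := #|_|; lia.
Qed.

Definition Qc n (C : {set vert n}) : bool := (#|C :&: Ps n| <= 1) && (#|C :&: Hs n| <= 1).
Definition cnt n j := #|[set C : {set vert n} | Qc C && (#|C| == j)]|.

Lemma numres_cnt n (hn : 3 <= n) k : k <= 2 ^ n -> num_resolving n k = cnt n (2 ^ n - k).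
Proof.
move=> kN; rewrite /num_resolving /cnt -(card_imset _ (@setC_inj _)).
apply: eq_card => C; rewrite inE; apply/imsetP/idP => [[U hU ->]|hC].
  move: hU; rewrite inE resolvingE // /Qc !setDE ![Ps n :&: _]setIC ![Hs n :&: _]setIC.
  move=> /andP [-> /eqP hk] /=; have := cardsC U; rewrite card_ord hk => E.
  by apply/eqP; move: E; set X := #|~: _|; set N := 2 ^ n; lia.
exists (~: C); last by rewrite setCK.
move: hC; rewrite inE resolvingE // /Qc !setDE !setCK ![Ps n :&: _]setIC ![Hs n :&: _]setIC.
move=> /andP [-> /eqP hk] /=; have := cardsC C; rewrite card_ord hk => E.
by apply/eqP; move: E; set X := #|~: _|; set N := 2 ^ n; lia.
Qed.

Lemma cardC3 n (hn : 3 <= n) (z : vert n) (zE : (z : nat) = 0) (C : {set vert n}) :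
  #|C| = (z \in C) + #|C :&: Ps n| + #|C :&: Hs n|.
Proof.
have h4 := gm_ge4 hn.
rewrite (cardsD1 z C) -addnA; congr (_ + _).
rewrite -(cardsID (Ps n) (C :\ z)); congr (_ + _); congr (#|pred_of_set _|);
  apply/setP => x; rewrite !inE ordeqE zE; case: (x \in C); rewrite ?andbF //=.
  all: rewrite ?andbT; apply/idP/idP => H; lia.
Qed.

Lemma cnt0 n : cnt n 0 = 1.
Proof.
rewrite /cnt; transitivity #|[set (@set0 (vert n))]|; last exact: cards1.
apply: eq_card => C; rewrite !inE cards_eq0.
by case: (C =P set0) => [->|_]; rewrite ?andbF // /Qc !set0I cards0.
Qed.

Lemma cnt1 n : cnt n 1 = 2 ^ n.
Proof.
rewrite /cnt; transitivity #|[set C : {set vert n} | #|C| == 1]|.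
  apply: eq_card => C; rewrite !inE; case: eqP => h; rewrite ?andbF ?andbT //.
  by rewrite /Qc !(leq_trans (subset_leq_card (subsetIl _ _))) ?h.
by rewrite card_draws card_ord bin1.
Qed.

Lemma bin2x a : 'C(a, 2) * 2 = a * a.-1.
Proof.
elim: a => // a IH; rewrite binS bin1 mulnDl IH /=; case: a {IH} => //= a; lia.
Qed.

Lemma gt1_sub T (C S : {set T}) : #|C| = 2 -> (1 < #|C :&: S|) = (C \subset S).
Proof.
move=> c2; apply/idP/idP => H.
  have : C :&: S == C.
    rewrite eqEcard subsetIl /= c2; have := subset_leq_card (subsetIl C S).
    by rewrite c2; lia.
  by move/eqP <-; rewrite subsetIr.
by move/setIidPl: H => ->; rewrite c2.
Qed.

Lemma cnt2 n (hn : 3 <= n) : cnt n 2 = gm n * gm n + gm n - 1.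
Proof.
have hN := N_2m hn; have h4 := gm_ge4 hn.
pose A2 := [set C : {set vert n} | #|C| == 2].
pose Q := [set C : {set vert n} | Qc C].
pose D1 := [set C : {set vert n} | C \subset Ps n & #|C| == 2].
pose D2 := [set C : {set vert n} | C \subset Hs n & #|C| == 2].
have e1 : cnt n 2 = #|A2 :&: Q|.
  by apply: eq_card => C; rewrite !inE andbC.
have e2 : A2 :\: Q = D1 :|: D2.
  apply/setP => C; rewrite !inE; case: (#|C| =P 2) => h; rewrite ?andbF ?andbT //.
  by rewrite /Qc negb_and -!ltnNge !gt1_sub.
have e3 : D1 :&: D2 = set0.
  apply/setP => C; rewrite !inE; apply/negbTE/negP.
  move=> /andP [/andP [s1 /eqP c] /andP [s2 _]]; have : 0 < #|C| by rewrite c.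
  case/card_gt0P => x xC; have := subsetP s1 x xC; have := subsetP s2 x xC.
  rewrite !inE; lia.
have := cardsID Q A2; rewrite e2 cardsU e3 cards0 subn0 /D1 /D2 !cards_draws.
rewrite /A2 card_draws card_ord card_Ps // card_Hs // -e1 hN => E.
have b1 := bin2x (2 * gm n); have b2 := bin2x (gm n).-1; have b3 := bin2x (gm n).
move: E b1 b2 b3; set x := 'C(_, 2); set y := 'C(_, 2); set w := 'C(_, 2).
set c := cnt n 2; set M := gm n.
have -> : (2 * M).-1 = 2 * M - 1 by lia.
have -> : M.-1.-1 = M - 2 by lia.
have -> : M.-1 = M - 1 by lia.
nia.
Qed.

Lemma cntbig n (hn : 3 <= n) j : 3 < j -> cnt n j = 0.
Proof.
move=> hj; have hN := N_2m hn; have h4 := gm_ge4 hn.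
have [z zE] := @exv n 0 ltac:(lia).
apply/eqP; rewrite cards_eq0; apply/eqP/setP => C; rewrite !inE.
apply/negbTE/negP => /andP [/andP [a b] /eqP c].
have := cardC3 hn zE C; rewrite c; move: a b.
set x := #|_ :&: Ps n|; set y := #|_ :&: Hs n|; case: (z \in C) => /=; lia.
Qed.

Lemma cnt3 n (hn : 3 <= n) : cnt n 3 = (gm n - 1) * gm n.
Proof.
have hN := N_2m hn; have h4 := gm_ge4 hn.
have [z zE] := @exv n 0 ltac:(lia).
pose f := fun ph : vert n * vert n => [set z; ph.1; ph.2].
have fP : forall p h, p \in Ps n -> h \in Hs n -> f (p, h) :&: Ps n = [set p].
  move=> p h; rewrite !inE => hp hh; apply/setP => x; rewrite !inE /= !ordeqE zE.
  apply/idP/idP => H; lia.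
have fH : forall p h, p \in Ps n -> h \in Hs n -> f (p, h) :&: Hs n = [set h].
  move=> p h; rewrite !inE => hp hh; apply/setP => x; rewrite !inE /= !ordeqE zE.
  apply/idP/idP => H; lia.
have -> : cnt n 3 = #|f @: setX (Ps n) (Hs n)|.
  apply: eq_card => C; rewrite inE; apply/idP/imsetP.
    move=> /andP [/andP [a b] /eqP c]; have := cardC3 hn zE C; rewrite c.
    move: a b; set x := #|_ :&: Ps n|; set y := #|_ :&: Hs n|.
    case zC : (z \in C) => /= a b E; last by lia.
    have /cards1P [p Ep] : x == 1 by apply/eqP; lia.
    have /cards1P [h Eh] : y == 1 by apply/eqP; lia.
    have := set11 p; rewrite -Ep inE => /andP [pC pP].
    have := set11 h; rewrite -Eh inE => /andP [hC hH].
    exists (p, h); first by rewrite inE pP hH.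
    apply/setP => w; rewrite !inE; apply/idP/idP => [wC|].
      case: (posnP w) => w0; first by rewrite ordeqE w0 zE eqxx.
      case: (ltnP w (gm n)) => wm.
        have : w \in C :&: Ps n by rewrite inE wC inE w0 wm.
        by rewrite Ep inE => ->; rewrite orbT.
      have : w \in C :&: Hs n by rewrite inE wC inE wm.
      by rewrite Eh inE => ->; rewrite !orbT.
    by rewrite /= => /orP [/orP [] | ] /eqP ->.
  move=> [[p h]]; rewrite inE /= => /andP [hp hh] ->.
  rewrite /Qc fP // fH // !cards1 /=.
  have := cardC3 hn zE (f (p, h)); rewrite fP // fH // !cards1 => ->.
  by rewrite !inE eqxx.
rewrite card_in_imset ?cardsX ?card_Ps ?card_Hs //; first by lia.
move=> [p h] [p' h']; rewrite !in_setX /= => /andP [hp hh] /andP [hp' hh'] E.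
have e1 := fP p h hp hh; have e2 := fH p h hp hh.
rewrite E fP // in e1; rewrite E fH // in e2.
by rewrite (set1_inj e1) (set1_inj e2).
Qed.

Lemma mdim n (hn : 3 <= n) : metric_dim n = 2 ^ n - 3.
Proof.
have hN := N_2m hn; have h4 := gm_ge4 hn.
have [z zE] := @exv n 0 ltac:(lia).
have small : forall U : {set vert n}, resolving U -> 2 ^ n - 3 <= #|U|.
  move=> U; rewrite resolvingE // !setDE ![Ps n :&: _]setIC ![Hs n :&: _]setIC.
  move=> /andP [a b]; have := cardC3 hn zE (~: U); have := cardsC U.
  rewrite card_ord; move: a b; set x := #|_ :&: Ps n|; set y := #|_ :&: Hs n|.
  set c := #|~: U|; set d := #|U|; set N := 2 ^ n; case: (z \in ~: U) => /=; lia.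
apply/eqP; rewrite eqn_leq; apply/andP; split.
  have : 0 < num_resolving n (2 ^ n - 3).
    rewrite numres_cnt //; last by lia.
    have -> : 2 ^ n - (2 ^ n - 3) = 3 by lia.
    rewrite cnt3 // muln_gt0; apply/andP; split; lia.
  case/card_gt0P => U; rewrite inE => /andP [R /eqP c].
  rewrite /metric_dim -c.
  by apply: (@bigmin_le_seq _ _ _ (fun U : {set vert n} => #|U|) _ U) => //; rewrite mem_index_enum.
rewrite /metric_dim; apply: (big_ind (fun x => 2 ^ n - 3 <= x)) => //.
- by rewrite card_ord; lia.
- by move=> x y hx hy; rewrite leq_min hx hy.
Qed.

Lemma rev4 (V : zmodType) (a b c d : V) : (a + b + c + d = d + c + b + a)%R.
Proof. by rewrite addrC [(a + b + c)%R]addrC [(a + b)%R]addrC !addrA. Qed.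

Unset Implicit Arguments.
Local Open Scope ring_scope.

Theorem mainTheorem7 (n : nat) (hn : (3 <= n)%N) :
  resolving_poly n =
    'X^(2 ^ n) + (2 ^ n)%:R *: 'X^(2 ^ n - 1)
    + ((2 : int) ^+ (2 * n - 2) + 2 ^+ (n - 1) - 1) *: 'X^(2 ^ n - 2)
    + ((2 : int) ^+ (2 * n - 2) - 2 ^+ (n - 1)) *: 'X^(2 ^ n - 3).
Proof.
have hN := N_2m hn; have h4 := gm_ge4 hn.
have E1 : (2 : int) ^+ (2 * n - 2) = ((gm n * gm n)%N)%:R.
  by rewrite /gm -expnD natrX; congr (_ ^+ _); lia.
have E2 : (2 : int) ^+ (n - 1) = (gm n)%:R.
  by rewrite /gm natrX; congr (_ ^+ _); lia.
have [M hM] : exists M, (2 ^ n)%N = M.+3 by exists (2 ^ n - 3)%N; lia.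
have nr : forall k, (k <= 3)%N -> num_resolving n (M + k)%N = cnt n (3 - k)%N.
  by move=> k hk; rewrite numres_cnt // hM; [congr cnt; lia | lia].
have r0 : num_resolving n M = cnt n 3 by rewrite -[M]addn0 nr.
have r1 : num_resolving n M.+1 = cnt n 2 by rewrite -addn1 nr.
have r2 : num_resolving n M.+2 = cnt n 1 by rewrite -addn2 nr.
have r3 : num_resolving n M.+3 = cnt n 0 by rewrite -addn3 nr.
rewrite /resolving_poly mdim // card_ord hM.
have -> : (M.+3 - 3)%N = M by lia.
rewrite !big_nat_recr //=.
all: try lia.
rewrite big_geq // add0r.
rewrite r0 r1 r2 r3 cnt0 cnt1 cnt2 // cnt3 // hM E1 E2.
have -> : (M.+3 - 1)%N = M.+2 by lia.
have -> : (M.+3 - 2)%N = M.+1 by lia.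
rewrite rev4 scale1r.
have gg : (gm n <= gm n * gm n)%N by rewrite leq_pmulr //; lia.
rewrite mulnBl mul1n.
rewrite (@natrB int _ _ gg).
have g1 : (1 <= gm n * gm n + gm n)%N by lia.
by rewrite (@natrB int _ _ g1) (@natrD int).
Qed.
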